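(* Let $K$ be a compact space such that any two points of $K$ are contained in a separable connected compact subset of $K$. If $K$ is almost totally disconnected, then $K$ is homeomorphic to a subspace of $\Sigma[0,1]^\Gamma$ for some set $\Gamma$.
   Context: For a set $\Gamma$, $\Sigma[0,1]^\Gamma$ is the subspace of $[0,1]^\Gamma$ (product topology) of points with countable support, and $\Sigma_0^1[0,1]^\Gamma$ is the subspace of $[0,1]^\Gamma$ consisting of those $x$ with $x_\gamma\in\{0,1\}$ for all but countably many $\gamma$. A compact space is almost totally disconnected if it is homeomorphic to a subspace of $\Sigma_0^1[0,1]^\Gamma$ for some set $\Gamma$. *)

(* Defs.v *)
From Stdlib Require Import Reals List.
Open Scope R_scope.

Record TopSpace := {
  carrier :> Type;
  is_open : (carrier -> Prop) -> Prop;
  open_full : is_open (fun _ => True);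
  open_inter : forall U V, is_open U -> is_open V -> is_open (fun x => U x /\ V x);
  open_union : forall (C : (carrier -> Prop) -> Prop),
      (forall U, C U -> is_open U) -> is_open (fun x => exists U, C U /\ U x)
}.

Definition countable {T : Type} (S : T -> Prop) : Prop :=
  exists g : T -> nat, forall a b, S a -> S b -> g a = g b -> a = b.

(* Compactness of a subset A of X (i.e. of A with the subspace topology). *)
Definition compact_set {X : TopSpace} (A : X -> Prop) : Prop :=
  forall C : (X -> Prop) -> Prop,
    (forall U, C U -> is_open X U) ->
    (forall x, A x -> exists U, C U /\ U x) ->
    exists l : list (X -> Prop),
      (forall U, In U l -> C U) /\ (forall x, A x -> exists U, In U l /\ U x).

Definition compact_space (X : TopSpace) : Prop := compact_set (fun _ : X => True).

(* Connectedness of a subset A (with the subspace topology). *)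
Definition connected_set {X : TopSpace} (A : X -> Prop) : Prop :=
  ~ (exists U V : X -> Prop, is_open X U /\ is_open X V /\
       (forall x, A x -> U x \/ V x) /\
       (exists x, A x /\ U x) /\ (exists x, A x /\ V x) /\
       (forall x, A x -> U x -> V x -> False)).

Definition separable_set {X : TopSpace} (A : X -> Prop) : Prop :=
  exists D : X -> Prop, (forall x, D x -> A x) /\ countable D /\
    (forall U, is_open X U -> (exists x, A x /\ U x) -> exists d, D d /\ U d).

(* Product topology on R^Gamma (restricting it to [0,1]^Gamma or its
   subspaces gives the subspace topology). Basic neighbourhoods of x are
   boxes determined by finitely many coordinates. *)
Definition prod_open {G : Type} (W : (G -> R) -> Prop) : Prop :=
  forall x, W x -> exists (l : list G) (eps : R), 0 < eps /\
    forall y, (forall g, In g l -> Rabs (y g - x g) < eps) -> W y.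

Definition embedding {X : TopSpace} {G : Type} (f : X -> (G -> R)) : Prop :=
  (forall a b, f a = f b -> a = b) /\
  (forall W, prod_open W -> is_open X (fun x => W (f x))) /\
  (forall U, is_open X U -> exists W, prod_open W /\ forall x, U x <-> W (f x)).

Definition in_Sigma {G : Type} (p : G -> R) : Prop :=
  (forall g, 0 <= p g <= 1) /\ countable (fun g => p g <> 0).

Definition in_Sigma01 {G : Type} (p : G -> R) : Prop :=
  (forall g, 0 <= p g <= 1) /\ countable (fun g => p g <> 0 /\ p g <> 1).

Definition almost_totally_disconnected (K : TopSpace) : Prop :=
  compact_space K /\
  exists (G : Type) (f : K -> (G -> R)), embedding f /\ forall x, in_Sigma01 (f x).

(* Main.v *)
Require Import Defs.
From Stdlib Require Import Reals List Lra Classical ClassicalEpsilon FunctionalExtensionality.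
From Stdlib Require Cantor.

Open Scope R_scope.

Lemma countable_sub {T : Type} (S S' : T -> Prop) :
  (forall a, S a -> S' a) -> countable S' -> countable S.
Proof. intros H [g Hg]. exists g. intros a b Ha Hb E. apply Hg; auto. Qed.

Definition chooseg {T : Type} (S : T -> Prop) : T -> nat :=
  match excluded_middle_informative (countable S) with
  | left H => proj1_sig (constructive_indefinite_description _ H)
  | right _ => fun _ => 0%nat
  end.

Lemma chooseg_spec {T : Type} (S : T -> Prop) : countable S ->
  forall a b, S a -> S b -> chooseg S a = chooseg S b -> a = b.
Proof.
  intros H. unfold chooseg. destruct (excluded_middle_informative _) as [H'|H'].
  - destruct (constructive_indefinite_description _ H') as [g Hg]. exact Hg.
  - contradiction.
Qed.

Lemma countable_union2 {T : Type} (S1 S2 : T -> Prop) :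
  countable S1 -> countable S2 -> countable (fun a => S1 a \/ S2 a).
Proof.
  intros H1 H2.
  exists (fun a => if excluded_middle_informative (S1 a)
                   then Cantor.to_nat (0%nat, chooseg S1 a)
                   else Cantor.to_nat (1%nat, chooseg S2 a)).
  intros a b Ha Hb E.
  destruct (excluded_middle_informative (S1 a)) as [A1|A1];
  destruct (excluded_middle_informative (S1 b)) as [B1|B1];
  apply (f_equal Cantor.of_nat) in E; rewrite !Cantor.cancel_of_to in E;
  inversion E as [[E2]].
  - apply (chooseg_spec S1 H1); auto.
  - apply (chooseg_spec S2 H2); tauto.
Qed.

Definition pickd {T U : Type} (D : T -> Prop) (P : T -> U -> Prop) (t0 : T) (u : U) : T :=
  match excluded_middle_informative (exists d, D d /\ P d u) with
  | left H => proj1_sig (constructive_indefinite_description _ H)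
  | right _ => t0
  end.

Lemma pickd_spec {T U : Type} (D : T -> Prop) (P : T -> U -> Prop) t0 u :
  (exists d, D d /\ P d u) -> D (pickd D P t0 u) /\ P (pickd D P t0 u) u.
Proof.
  intros H. unfold pickd. destruct (excluded_middle_informative _) as [H'|H'].
  - destruct (constructive_indefinite_description _ H') as [d Hd]. exact Hd.
  - contradiction.
Qed.

Lemma countable_bigunion {T U : Type} (D : T -> Prop) (P : T -> U -> Prop) (t0 : T) :
  countable D -> (forall d, D d -> countable (P d)) ->
  countable (fun u => exists d, D d /\ P d u).
Proof.
  intros HD HP.
  exists (fun u => let d := pickd D P t0 u in Cantor.to_nat (chooseg D d, chooseg (P d) u)).
  intros a b Ha Hb E. cbv zeta in E.
  destruct (pickd_spec D P t0 a Ha) as [Da Pa].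
  destruct (pickd_spec D P t0 b Hb) as [Db Pb].
  apply (f_equal Cantor.of_nat) in E; rewrite !Cantor.cancel_of_to in E.
  inversion E as [[E1 E2]].
  pose proof (chooseg_spec D HD _ _ Da Db E1) as Ed.
  rewrite Ed in E2, Pa.
  apply (chooseg_spec _ (HP _ Db)); auto.
Qed.

Lemma prod_open_interval {G : Type} (gm : G) (a b : R) :
  prod_open (fun p : G -> R => a < p gm < b).
Proof.
  intros x Hx. exists (gm :: nil), (Rmin (x gm - a) (b - x gm)).
  split. { apply Rmin_glb_lt; lra. }
  intros y Hy. specialize (Hy gm (or_introl eq_refl)).
  pose proof (Rmin_l (x gm - a) (b - x gm)). pose proof (Rmin_r (x gm - a) (b - x gm)).
  apply Rabs_def2 in Hy. lra.
Qed.

Definition flp {G : Type} (c p : G -> R) : G -> R :=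
  fun g => if Req_EM_T (c g) 1 then 1 - p g else p g.

Lemma flp_flp {G : Type} (c p : G -> R) : flp c (flp c p) = p.
Proof.
  apply functional_extensionality. intro g. unfold flp.
  destruct (Req_EM_T (c g) 1); ring.
Qed.

Lemma flp_abs {G : Type} (c y p : G -> R) g :
  Rabs (flp c y g - flp c p g) = Rabs (y g - p g).
Proof.
  unfold flp. destruct (Req_EM_T (c g) 1); auto.
  replace (1 - y g - (1 - p g)) with (- (y g - p g)) by ring. apply Rabs_Ropp.
Qed.

Lemma flp_open {G : Type} (c : G -> R) (W : (G -> R) -> Prop) :
  prod_open W -> prod_open (fun p => W (flp c p)).
Proof.
  intros HW x Hx. destruct (HW _ Hx) as [l [eps [He H]]].
  exists l, eps. split; auto. intros y Hy. apply H. intros g Hg.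
  rewrite flp_abs. auto.
Qed.

Theorem mainTheorem4 (K : TopSpace) :
  compact_space K ->
  (forall x y : K, exists A : K -> Prop,
      A x /\ A y /\ separable_set A /\ connected_set A /\ compact_set A) ->
  almost_totally_disconnected K ->
  exists (G : Type) (f : K -> (G -> R)), embedding f /\ forall x, in_Sigma (f x).
Proof.
  intros _ Hconn [_ [G [f [[Hinj [Hcont Hopen]] H01]]]].
  destruct (classic (exists x0 : K, True)) as [[x0 _]|Hne].
  2:{ exists G, f. split. split; auto. intros x. exfalso. apply Hne. exists x; auto. }
  set (c := f x0).
  exists G, (fun x => flp c (f x)). split; [split; [|split]|].
  - intros a b E. apply Hinj.
    rewrite <- (flp_flp c (f a)), <- (flp_flp c (f b)), E. reflexivity.
  - intros W HW. apply (Hcont (fun p => W (flp c p))). apply flp_open; auto.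
  - intros U HU. destruct (Hopen U HU) as [W [HW HUW]].
    exists (fun q => W (flp c q)). split. apply flp_open; auto.
    intros x. rewrite flp_flp. apply HUW.
  - intros x. split.
    { intros g. unfold flp. destruct (H01 x) as [B _]. specialize (B g).
      destruct (Req_EM_T (c g) 1); lra. }
    destruct (Hconn x0 x) as [A [Ax0 [Ax [[D [DA [DC Ddense]]] [Acon _]]]]].
    apply countable_sub with
      (S' := fun g => (f x0 g <> 0 /\ f x0 g <> 1) \/
                      (exists d, D d /\ (f d g <> 0 /\ f d g <> 1))).
    2:{ apply countable_union2. apply (proj2 (H01 x0)).
        apply (countable_bigunion D (fun d g => f d g <> 0 /\ f d g <> 1) x0 DC).
        intros d _. apply (proj2 (H01 d)). }
    intros g Hg. apply NNPP. intros Hn. apply not_or_and in Hn. destruct Hn as [N0 NC].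
    assert (HA : forall a, A a -> f a g = 0 \/ f a g = 1).
    { intros a Aa. apply NNPP. intros Hb. apply not_or_and in Hb.
      destruct (proj1 (H01 a) g) as [B1 B2].
      destruct (Ddense (fun y => 0 < f y g < 1)) as [d [Dd Ud]].
      - apply (Hcont (fun p => 0 < p g < 1)). apply prod_open_interval.
      - exists a. split; auto. destruct Hb. split; apply Rnot_le_lt; intro; apply H; lra.
      - apply NC. exists d. split; auto. split; lra. }
    assert (Eq : f x g = f x0 g).
    { apply NNPP. intros Hne. apply Acon.
      exists (fun y => -1 < f y g < /2), (fun y => /2 < f y g < 2).
      split. apply (Hcont (fun p => -1 < p g < /2)). apply prod_open_interval.
      split. apply (Hcont (fun p => /2 < p g < 2)). apply prod_open_interval.
      split. { intros a Aa. destruct (HA a Aa) as [E|E]; rewrite E; [left|right]; lra. }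
      destruct (HA x Ax) as [E1|E1]; destruct (HA x0 Ax0) as [E2|E2];
        try (exfalso; apply Hne; congruence).
      - split. exists x; split; auto; rewrite E1; lra.
        split. exists x0; split; auto; rewrite E2; lra.
        intros; lra.
      - split. exists x0; split; auto; rewrite E2; lra.
        split. exists x; split; auto; rewrite E1; lra.
        intros; lra. }
    apply Hg. unfold flp, c. rewrite Eq.
    destruct (HA x0 Ax0) as [E|E]; rewrite E; destruct (Req_EM_T 0 1); try lra;
      destruct (Req_EM_T 1 1); lra.
Qed.
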